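(* Let $X$ and $Y$ be bipartite graphs without isolated vertices. If $B_0(X)$ and $B_0(Y)$ are isomorphic as posets, then $X$ and $Y$ are isomorphic as graphs.
   Context: A graph $X$ is a set $V(X)$ with a symmetric subset $E(X)\subset V(X)\times V(X)$; $N(v)=\{w:(v,w)\in E(X)\}$, and $v$ is isolated if $N(v)=\emptyset$. $X$ is bipartite if there is a graph homomorphism to $K_2$ (vertices $\{1,2\}$, edges $(1,2),(2,1)$); in particular it has no loops. $B_0(X)$ is the poset whose elements are the unordered pairs $\{\sigma,\tau\}$ of non-empty (possibly infinite) subsets of $V(X)$ with $\sigma\times\tau\subset E(X)$, with $\alpha\le\beta$ iff for each $\sigma\in\alpha$ there is $\tau\in\beta$ with $\sigma\subset\tau$. *)

(* Defs.v *)
(* graphs are possibly infinite, so vertex sets are arbitrary Types. *)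
From Stdlib Require Import Classical FunctionalExtensionality PropExtensionality.

Definition symmetric_rel {V : Type} (E : V -> V -> Prop) : Prop :=
  forall v w, E v w -> E w v.

Definition isolated {V : Type} (E : V -> V -> Prop) (v : V) : Prop :=
  forall w, ~ E v w.

Definition bipartite {V : Type} (E : V -> V -> Prop) : Prop :=
  exists c : V -> bool, forall v w, E v w -> c v <> c w.

Definition nonempty {V : Type} (s : V -> Prop) : Prop := exists v, s v.

(* alpha is an element of B_0(X): alpha = {sigma, tau} (unordered pair, as a set
   of subsets) with sigma, tau non-empty and sigma x tau contained in E. *)
Definition is_B0 {V : Type} (E : V -> V -> Prop) (alpha : (V -> Prop) -> Prop) : Prop :=
  exists sigma tau : V -> Prop,
    nonempty sigma /\ nonempty tau /\
    (forall v w, sigma v -> tau w -> E v w) /\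
    (forall rho, alpha rho <-> (rho = sigma \/ rho = tau)).

Definition B0 {V : Type} (E : V -> V -> Prop) : Type :=
  { alpha : (V -> Prop) -> Prop | is_B0 E alpha }.

Definition B0_le {V : Type} {E : V -> V -> Prop} (a b : B0 E) : Prop :=
  forall sigma, proj1_sig a sigma ->
    exists tau, proj1_sig b tau /\ (forall v, sigma v -> tau v).

Definition poset_iso {V1 V2 : Type} (E1 : V1 -> V1 -> Prop) (E2 : V2 -> V2 -> Prop) : Prop :=
  exists (f : B0 E1 -> B0 E2) (g : B0 E2 -> B0 E1),
    (forall a, g (f a) = a) /\ (forall b, f (g b) = b) /\
    (forall a b, B0_le a b <-> B0_le (f a) (f b)).

Definition graph_iso {V1 V2 : Type} (E1 : V1 -> V1 -> Prop) (E2 : V2 -> V2 -> Prop) : Prop :=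
  exists (h : V1 -> V2) (k : V2 -> V1),
    (forall v, k (h v) = v) /\ (forall w, h (k w) = w) /\
    (forall v w, E1 v w <-> E2 (h v) (h w)).

(* Main.v *)
Require Import Defs.
From Stdlib Require Import Classical FunctionalExtensionality PropExtensionality ProofIrrelevance ClassicalEpsilon.

Definition sing {V : Type} (v : V) : V -> Prop := fun z => z = v.
Definition Inc {V : Type} {E : V -> V -> Prop} (v : V) (a : B0 E) : Prop := proj1_sig a (sing v).
Definition atom {V : Type} {E : V -> V -> Prop} (a : B0 E) : Prop :=
  forall x : B0 E, B0_le x a -> x = a.
Definition Adj {V : Type} {E : V -> V -> Prop} (a b : B0 E) : Prop :=
  exists c, B0_le a c /\ B0_le b c /\ forall d, atom d -> B0_le d c -> d = a \/ d = b.
Definition good {V : Type} (E : V -> V -> Prop) (c : V -> bool) : Prop :=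
  symmetric_rel E /\ (forall v w, E v w -> c v <> c w) /\ (forall v, ~ isolated E v).
Definition IsAt {V : Type} {E : V -> V -> Prop} (a : B0 E) (v w : V) : Prop :=
  E v w /\ forall rho, proj1_sig a rho <-> (rho = sing v \/ rho = sing w).

Lemma B0_ext {V} {E : V -> V -> Prop} (a b : B0 E) :
  (forall rho, proj1_sig a rho <-> proj1_sig b rho) -> a = b.
Proof.
  destruct a as [a pa], b as [b pb]; simpl; intros H.
  assert (a = b) by (apply functional_extensionality; intro r; apply propositional_extensionality; apply H).
  subst b. f_equal. apply proof_irrelevance.
Qed.

Lemma sing_inj {V} (v w : V) : sing v = sing w -> v = w.
Proof. intro H. assert (H0 : sing v v) by reflexivity. rewrite H in H0. exact H0. Qed.

Lemma sub_sing {V} (s : V -> Prop) (v : V) : nonempty s -> (forall z, s z -> z = v) -> s = sing v.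
Proof.
  intros [z hz] H. apply functional_extensionality; intro u; apply propositional_extensionality.
  split; intro h. apply H, h. unfold sing in h; subst u. rewrite <- (H z hz); exact hz.
Qed.

Lemma no_loop {V} {E : V -> V -> Prop} {c} (G : good E c) v : ~ E v v.
Proof. destruct G as [_ [hc _]]. intro h. exact (hc v v h eq_refl). Qed.

Lemma no_tri {V} {E : V -> V -> Prop} {c} (G : good E c) x y z : E x y -> E y z -> E x z -> False.
Proof.
  destruct G as [_ [hc _]]. intros h1 h2 h3.
  pose proof (hc _ _ h1); pose proof (hc _ _ h2); pose proof (hc _ _ h3).
  destruct (c x), (c y), (c z); congruence.
Qed.

Lemma mk_at {V} {E : V -> V -> Prop} (v w : V) : E v w -> exists a : B0 E, IsAt a v w.
Proof.
  intros h.
  assert (HB : is_B0 E (fun rho => rho = sing v \/ rho = sing w)).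
  { exists (sing v), (sing w). split; [exists v; reflexivity|].
    split; [exists w; reflexivity|]. split.
    - intros x y hx hy; unfold sing in *; subst; exact h.
    - intros; tauto. }
  exists (exist _ _ HB). split; [exact h|]. simpl. tauto.
Qed.

Lemma IsAt_Inc {V} {E : V -> V -> Prop} (a : B0 E) v w u : IsAt a v w -> (Inc u a <-> u = v \/ u = w).
Proof.
  intros [_ H]. unfold Inc. rewrite H.
  split; intros [h|h]; [left|right|left|right]; first [apply sing_inj; exact h | rewrite h; reflexivity].
Qed.

Lemma IsAt_sym {V} {E : V -> V -> Prop} {c} (G : good E c) (a : B0 E) v w : IsAt a v w -> IsAt a w v.
Proof.
  destruct G as [hs _]. intros [h H]. split; [apply hs, h|]. intro rho; rewrite H; tauto.
Qed.

Lemma IsAt_unique {V} {E : V -> V -> Prop} (a b : B0 E) v w : IsAt a v w -> IsAt b v w -> a = b.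
Proof.
  intros [_ Ha] [_ Hb]. apply B0_ext. intro rho. rewrite Ha, Hb. tauto.
Qed.

Lemma comp_ne {V} {E : V -> V -> Prop} (a : B0 E) rho : proj1_sig a rho -> nonempty rho.
Proof.
  destruct a as [a pa]; simpl; intro h. destruct pa as [s [t [hs [ht [_ H]]]]]. apply H in h.
  destruct h; subst; assumption.
Qed.

Lemma atom_IsAt {V} {E : V -> V -> Prop} (a : B0 E) : atom a -> exists v w, IsAt a v w.
Proof.
  intro Ha. destruct (proj2_sig a) as [s [t [[v hv] [[w hw] [hst H]]]]].
  destruct (mk_at v w (hst v w hv hw)) as [b Hb].
  assert (e : b = a).
  { apply Ha. intros rho hr. apply Hb in hr. destruct hr; subst rho.
    - exists s. split; [apply H; left; reflexivity|]. intros z hz; unfold sing in hz; subst; exact hv.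
    - exists t. split; [apply H; right; reflexivity|]. intros z hz; unfold sing in hz; subst; exact hw. }
  subst b. exists v, w; exact Hb.
Qed.

Lemma IsAt_atom {V} {E : V -> V -> Prop} {c} (G : good E c) (a : B0 E) v w : IsAt a v w -> atom a.
Proof.
  intros Hab x Hx. apply B0_ext.
  destruct (proj2_sig x) as [s [t [hsn [htn [hst H]]]]].
  assert (Hc : forall rho, proj1_sig x rho -> rho = sing v \/ rho = sing w).
  { intros rho hr. destruct (Hx rho hr) as [tau [ht hsub]]. apply Hab in ht.
    pose proof (comp_ne x rho hr) as hne.
    destruct ht; subst tau; [left|right]; apply sub_sing; auto. }
  assert (Hs : proj1_sig x s) by (apply H; left; reflexivity).
  assert (Ht : proj1_sig x t) by (apply H; right; reflexivity).
  intro rho. rewrite H. rewrite (proj2 Hab).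
  destruct (Hc s Hs), (Hc t Ht); subst s t.
  - exfalso. exact (no_loop G v (hst v v eq_refl eq_refl)).
  - tauto.
  - tauto.
  - exfalso. exact (no_loop G w (hst w w eq_refl eq_refl)).
Qed.

Lemma IsAt_reorient {V} {E : V -> V -> Prop} {c} (G : good E c) (a : B0 E) p q x y :
  IsAt a p q -> Inc x a -> Inc y a -> x <> y -> IsAt a x y.
Proof.
  intros H hx hy nxy. rewrite (IsAt_Inc a p q) in hx, hy by exact H.
  destruct hx, hy; subst; try (exfalso; apply nxy; reflexivity).
  - exact H.
  - apply (IsAt_sym G), H.
Qed.

Lemma atom_ends {V} {E : V -> V -> Prop} {c} (G : good E c) (a : B0 E) :
  atom a -> exists v w, E v w /\ v <> w /\ forall u, Inc u a <-> u = v \/ u = w.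
Proof.
  intro Ha. destruct (atom_IsAt a Ha) as [v [w H]]. exists v, w. split; [exact (proj1 H)|].
  split; [intro e; subst; exact (no_loop G w (proj1 H))|]. intro u; apply (IsAt_Inc a v w u H).
Qed.

Lemma L_two {V} {E : V -> V -> Prop} {c} (G : good E c) (a b : B0 E) x y :
  atom a -> atom b -> Inc x a -> Inc y a -> Inc x b -> Inc y b -> x <> y -> a = b.
Proof.
  intros Ha Hb h1 h2 h3 h4 n.
  destruct (atom_IsAt a Ha) as [p [q Hp]]. destruct (atom_IsAt b Hb) as [r [s Hr]].
  apply (IsAt_unique a b x y); eapply IsAt_reorient; eauto.
Qed.

Lemma L_edge {V} {E : V -> V -> Prop} {c} (G : good E c) (a : B0 E) x y :
  atom a -> Inc x a -> Inc y a -> x <> y -> E x y.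
Proof.
  intros Ha h1 h2 n. destruct (atom_IsAt a Ha) as [p [q Hp]].
  exact (proj1 (IsAt_reorient G a p q x y Hp h1 h2 n)).
Qed.

Lemma L_at {V} {E : V -> V -> Prop} {c} (G : good E c) v w :
  E v w -> exists a : B0 E, atom a /\ Inc v a /\ Inc w a.
Proof.
  intro h. destruct (mk_at v w h) as [a Ha]. exists a. split; [exact (IsAt_atom G a v w Ha)|].
  rewrite !(IsAt_Inc a v w _ Ha). tauto.
Qed.

Lemma L_exist {V} {E : V -> V -> Prop} {c} (G : good E c) v : exists a : B0 E, atom a /\ Inc v a.
Proof.
  pose proof G as [_ [_ hi]]. destruct (not_all_not_ex _ _ (hi v)) as [w hw].
  destruct (L_at G v w hw) as [a [? [? ?]]]. eauto.
Qed.

Lemma L_other {V} {E : V -> V -> Prop} {c} (G : good E c) (a : B0 E) v :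
  atom a -> Inc v a -> exists w, w <> v /\ Inc w a /\ forall u, Inc u a -> u = v \/ u = w.
Proof.
  intros Ha hv. destruct (atom_ends G a Ha) as [p [q [_ [npq Hi]]]].
  apply Hi in hv. destruct hv; subst.
  - exists q. split; [intro e; apply npq; auto|]. split; [apply Hi; auto|]. intros u hu; apply Hi, hu.
  - exists p. split; [exact npq|]. split; [apply Hi; auto|]. intros u hu; apply Hi in hu; tauto.
Qed.

Lemma L_ends2 {V} {E : V -> V -> Prop} {c} (G : good E c) (a : B0 E) v w u :
  atom a -> Inc v a -> Inc w a -> v <> w -> Inc u a -> u = v \/ u = w.
Proof.
  intros Ha hv hw n hu. destruct (atom_IsAt a Ha) as [p [q Hp]].
  pose proof (IsAt_reorient G a p q v w Hp hv hw n) as H.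
  exact (proj1 (IsAt_Inc a v w u H) hu).
Qed.

Lemma le_refl {V} {E : V -> V -> Prop} (a : B0 E) : B0_le a a.
Proof. intros rho h; exists rho; split; auto. Qed.

Lemma L_adj_r {V} {E : V -> V -> Prop} {c} (G : good E c) (a b : B0 E) :
  atom a -> atom b -> Adj a b -> exists v, Inc v a /\ Inc v b.
Proof.
  intros Ha Hb [c0 [Hac [Hbc Hd]]].
  destruct (proj2_sig c0) as [s [t [hsn [htn [hst H]]]]].
  assert (side : forall (x : B0 E) u, B0_le x c0 -> Inc u x -> s u \/ t u).
  { intros x u hx hu. destruct (hx _ hu) as [tau [ht hsub]]. apply H in ht.
    destruct ht; subst tau; [left|right]; apply hsub; reflexivity. }
  assert (spl : forall x : B0 E, atom x -> B0_le x c0 ->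
            (exists p, Inc p x /\ s p) /\ (exists p, Inc p x /\ t p)).
  { intros x hx hle. destruct (atom_ends G x hx) as [p [q [hpq [npq Hi]]]].
    assert (Ip : Inc p x) by (apply Hi; left; reflexivity).
    assert (Iq : Inc q x) by (apply Hi; right; reflexivity).
    destruct htn as [z hz]. destruct hsn as [z' hz'].
    destruct (side x p hle Ip), (side x q hle Iq).
    - exfalso. exact (no_tri G p q z hpq (hst q z H1 hz) (hst p z H0 hz)).
    - split; eauto.
    - split; eauto.
    - exfalso. exact (no_tri G z' p q (hst z' p hz' H0) hpq (hst z' q hz' H1)). }
  destruct (spl a Ha Hac) as [[p [hp1 hp2]] _]. destruct (spl b Hb Hbc) as [_ [q [hq1 hq2]]].
  destruct (mk_at p q (hst p q hp2 hq2)) as [d Hd'].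
  assert (Hdle : B0_le d c0).
  { intros rho hr. apply Hd' in hr. destruct hr; subst rho.
    - exists s; split; [apply H; left; reflexivity|]. intros z hz; unfold sing in hz; subst; exact hp2.
    - exists t; split; [apply H; right; reflexivity|]. intros z hz; unfold sing in hz; subst; exact hq2. }
  destruct (Hd d (IsAt_atom G d p q Hd') Hdle) as [e|e]; subst d.
  - exists q. split; [apply (IsAt_Inc a p q q Hd'); right; reflexivity| exact hq1].
  - exists p. split; [exact hp1| apply (IsAt_Inc b p q p Hd'); left; reflexivity].
Qed.

Lemma L_adj_l {V} {E : V -> V -> Prop} {c} (G : good E c) (a b : B0 E) v :
  atom a -> atom b -> Inc v a -> Inc v b -> Adj a b.
Proof.
  intros Ha Hb Iva Ivb.
  destruct (classic (a = b)) as [e|ne].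
  { subst. exists b. split; [apply le_refl|]. split; [apply le_refl|].
    intros d hd hle. left. exact (Hb d hle). }
  destruct (L_other G a v Ha Iva) as [w [nwv [Iwa _]]].
  destruct (L_other G b v Hb Ivb) as [u [nuv [Iub _]]].
  destruct (atom_IsAt a Ha) as [p0 [q0 H0]].
  pose proof (IsAt_reorient G a p0 q0 v w H0 Iva Iwa (fun e => nwv (eq_sym e))) as Aa.
  destruct (atom_IsAt b Hb) as [p1 [q1 H1]].
  pose proof (IsAt_reorient G b p1 q1 v u H1 Ivb Iub (fun e => nuv (eq_sym e))) as Ab.
  assert (nwu : w <> u) by (intro e; subst; apply ne; exact (IsAt_unique a b v u Aa Ab)).
  set (W := fun z => z = w \/ z = u).
  assert (HB : is_B0 E (fun rho => rho = sing v \/ rho = W)).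
  { exists (sing v), W. split; [exists v; reflexivity|]. split; [exists w; left; reflexivity|].
    split; [|intros; tauto].
    intros x y hx hy. unfold sing in hx; subst x. destruct hy; subst y; [exact (proj1 Aa)|exact (proj1 Ab)]. }
  exists (exist _ _ HB). split; [|split].
  - intros rho hr. apply Aa in hr. destruct hr; subst rho.
    + exists (sing v); simpl; split; auto.
    + exists W; simpl; split; auto. intros z hz; left; exact hz.
  - intros rho hr. apply Ab in hr. destruct hr; subst rho.
    + exists (sing v); simpl; split; auto.
    + exists W; simpl; split; auto. intros z hz; right; exact hz.
  - intros d hd hle.
    destruct (atom_IsAt d hd) as [p [q Hpq]].
    assert (sd : forall z, Inc z d -> z = v \/ z = w \/ z = u).
    { intros z hz. destruct (hle _ hz) as [tau [ht hsub]]. simpl in ht.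
      destruct ht; subst tau.
      - left; apply hsub; reflexivity.
      - right; apply hsub; reflexivity. }
    assert (Ip : Inc p d) by (apply (IsAt_Inc d p q p Hpq); left; reflexivity).
    assert (Iq : Inc q d) by (apply (IsAt_Inc d p q q Hpq); right; reflexivity).
    assert (Epq := proj1 Hpq).
    assert (Evw := proj1 Aa). assert (Evu := proj1 Ab).
    pose proof G as [hs _].
    destruct (sd p Ip) as [-> | [-> | ->]], (sd q Iq) as [-> | [-> | ->]];
      try (exfalso; eapply no_loop; eauto; fail).
    + left; exact (IsAt_unique d a v w Hpq Aa).
    + right; exact (IsAt_unique d b v u Hpq Ab).
    + left; exact (IsAt_unique d a v w (IsAt_sym G d w v Hpq) Aa).
    + exfalso; exact (no_tri G v w u Evw Epq Evu).
    + right; exact (IsAt_unique d b v u (IsAt_sym G d u v Hpq) Ab).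
    + exfalso; exact (no_tri G v u w Evu Epq Evw).
Qed.

Lemma L_tri {V} {E : V -> V -> Prop} {c} (G : good E c) (a b c0 : B0 E) v :
  atom a -> atom b -> atom c0 -> a <> b -> Inc v a -> Inc v b ->
  (exists z, Inc z c0 /\ Inc z a) -> (exists z, Inc z c0 /\ Inc z b) -> Inc v c0.
Proof.
  intros Ha Hb Hc nab Iva Ivb [z1 [h1c h1a]] [z2 [h2c h2b]].
  destruct (classic (Inc v c0)) as [h|h]; auto. exfalso.
  destruct (L_other G a v Ha Iva) as [p [npv [Ipa Ea]]].
  destruct (L_other G b v Hb Ivb) as [q [nqv [Iqb Eb]]].
  destruct (Ea z1 h1a) as [-> | ->]; [contradiction|].
  destruct (Eb z2 h2b) as [-> | ->]; [contradiction|].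
  assert (npq : p <> q).
  { intro e; subst q. apply nab. apply (L_two G a b v p); auto. }
  apply (no_tri G v p q).
  - apply (L_edge G a); auto.
  - apply (L_edge G c0); auto.
  - apply (L_edge G b); auto.
Qed.

Definition iso_data {V1 V2 : Type} {E1 : V1 -> V1 -> Prop} {E2 : V2 -> V2 -> Prop}
  (f : B0 E1 -> B0 E2) (g : B0 E2 -> B0 E1) : Prop :=
  (forall a, g (f a) = a) /\ (forall b, f (g b) = b) /\ (forall a b, B0_le a b <-> B0_le (f a) (f b)).

Section Iso.
Context {V1 V2 : Type} {E1 : V1 -> V1 -> Prop} {E2 : V2 -> V2 -> Prop}
  {f : B0 E1 -> B0 E2} {g : B0 E2 -> B0 E1}.

Lemma iso_sym : iso_data f g -> iso_data g f.
Proof.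
  intros [gf [fg hf]]. split; [exact fg|split; [exact gf|]]. intros a b.
  rewrite (hf (g a) (g b)), !fg. tauto.
Qed.

Lemma atom_f : iso_data f g -> forall a, atom a -> atom (f a).
Proof.
  intros [gf [fg hf]] a Ha y hy. rewrite <- (fg y). f_equal. apply Ha. apply hf. rewrite fg. exact hy.
Qed.

Lemma f_inj : iso_data f g -> forall a b, f a = f b -> a = b.
Proof. intros [gf _] a b e. rewrite <- (gf a), <- (gf b), e. reflexivity. Qed.
End Iso.

Lemma Adj_f {V1 V2 : Type} {E1 : V1 -> V1 -> Prop} {E2 : V2 -> V2 -> Prop}
  {f : B0 E1 -> B0 E2} {g : B0 E2 -> B0 E1} : iso_data f g -> forall a b, Adj a b -> Adj (f a) (f b).
Proof.
  intros I a b [c [hac [hbc hd]]]. pose proof I as [gf [fg hf]]. exists (f c).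
  split; [apply hf, hac|]. split; [apply hf, hbc|].
  intros d Hd hle.
  assert (Hgd : atom (g d)) by exact (atom_f (iso_sym I) d Hd).
  assert (hle' : B0_le (g d) c) by (apply hf; rewrite fg; exact hle).
  destruct (hd (g d) Hgd hle') as [e|e]; [left|right]; rewrite <- e, fg; reflexivity.
Qed.

Definition P {V1 V2 : Type} {E1 : V1 -> V1 -> Prop} {E2 : V2 -> V2 -> Prop}
  (f : B0 E1 -> B0 E2) (v : V1) (x : V2) : Prop :=
  forall a : B0 E1, atom a -> (Inc v a <-> Inc x (f a)).

Definition R {V1 V2 : Type} {E1 : V1 -> V1 -> Prop} {E2 : V2 -> V2 -> Prop}
  (f : B0 E1 -> B0 E2) (c1 : V1 -> bool) (c2 : V2 -> bool) (v : V1) (x : V2) : Prop :=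
  P f v x /\ ((exists x', x' <> x /\ P f v x') -> c1 v = c2 x).

Section Vert.
Context {V1 V2 : Type} {E1 : V1 -> V1 -> Prop} {E2 : V2 -> V2 -> Prop}
  {f : B0 E1 -> B0 E2} {g : B0 E2 -> B0 E1} {c1 : V1 -> bool} {c2 : V2 -> bool}.

Lemma share_f (G1 : good E1 c1) (G2 : good E2 c2) (I : iso_data f g) (a b : B0 E1) :
  atom a -> atom b -> (exists z, Inc z a /\ Inc z b) -> exists z, Inc z (f a) /\ Inc z (f b).
Proof.
  intros Ha Hb [z [h1 h2]]. apply (L_adj_r G2); try apply (atom_f I); auto.
  apply (Adj_f I). exact (L_adj_l G1 a b z Ha Hb h1 h2).
Qed.

Lemma share_g (G1 : good E1 c1) (G2 : good E2 c2) (I : iso_data f g) (a b : B0 E1) :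
  atom a -> atom b -> (exists z, Inc z (f a) /\ Inc z (f b)) -> exists z, Inc z a /\ Inc z b.
Proof.
  intros Ha Hb [z [h1 h2]]. pose proof I as [gf _].
  apply (L_adj_r G1); auto. rewrite <- (gf a), <- (gf b).
  apply (Adj_f (iso_sym I)). apply (L_adj_l G2 _ _ z); auto; apply (atom_f I); auto.
Qed.

Lemma D2 (G1 : good E1 c1) (G2 : good E2 c2) (I : iso_data f g) (a b : B0 E1) v :
  atom a -> atom b -> a <> b -> Inc v a -> Inc v b -> exists x, P f v x.
Proof.
  intros Ha Hb nab Iva Ivb.
  destruct (share_f G1 G2 I a b Ha Hb (ex_intro _ v (conj Iva Ivb))) as [x [Ixa Ixb]].
  exists x. intros c0 Hc. split; intro h.
  - apply (L_tri G2 (f a) (f b) (f c0) x); try apply (atom_f I); auto.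
    + intro e; apply nab; exact (f_inj I a b e).
    + destruct (share_f G1 G2 I c0 a Hc Ha (ex_intro _ v (conj h Iva))) as [z [? ?]]; eauto.
    + destruct (share_f G1 G2 I c0 b Hc Hb (ex_intro _ v (conj h Ivb))) as [z [? ?]]; eauto.
  - apply (L_tri G1 a b c0 v); auto.
    + destruct (share_g G1 G2 I c0 a Hc Ha (ex_intro _ x (conj h Ixa))) as [z [? ?]]; eauto.
    + destruct (share_g G1 G2 I c0 b Hc Hb (ex_intro _ x (conj h Ixb))) as [z [? ?]]; eauto.
Qed.

Lemma Pex (G1 : good E1 c1) (G2 : good E2 c2) (I : iso_data f g) v : exists x, P f v x.
Proof.
  destruct (L_exist G1 v) as [e [He Ive]].
  destruct (classic (exists b, atom b /\ b <> e /\ Inc v b)) as [[b [Hb [nbe Ivb]]]|nD].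
  { exact (D2 G1 G2 I b e v Hb He nbe Ivb Ive). }
  assert (onlyv : forall c0 : B0 E1, atom c0 -> Inc v c0 -> c0 = e).
  { intros c0 h1 h2; apply NNPP; intro n; apply nD; eauto. }
  destruct (L_other G1 e v He Ive) as [w [nwv [Iwe Ee]]].
  assert (Hfe := atom_f I e He).
  destruct (classic (exists b, atom b /\ b <> e /\ Inc w b)) as [[b [Hb [nbe Iwb]]]|nDw].
  - destruct (D2 G1 G2 I b e w Hb He nbe Iwb Iwe) as [z Pz].
    assert (Ize : Inc z (f e)) by (apply Pz; auto).
    destruct (L_other G2 (f e) z Hfe Ize) as [z' [nz [Iz' _]]].
    exists z'. intros c0 hc0. split; intro h.
    + rewrite (onlyv c0 hc0 h). exact Iz'.
    + destruct (classic (c0 = e)) as [->|nce]; [exact Ive|].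
      destruct (share_g G1 G2 I c0 e hc0 He (ex_intro _ z' (conj h Iz'))) as [u [Iuc Iue]].
      destruct (Ee u Iue) as [-> | ->]; [exact Iuc|].
      exfalso. apply nce. apply (f_inj I).
      apply (L_two G2 (f c0) (f e) z z'); auto; try apply (atom_f I); auto.
      * apply Pz; auto.
  - assert (onlyw : forall c0 : B0 E1, atom c0 -> Inc w c0 -> c0 = e).
    { intros c0 h1 h2; apply NNPP; intro n; apply nDw; eauto. }
    destruct (atom_ends G2 (f e) Hfe) as [x [y [_ [_ Hxy]]]].
    assert (Ix : Inc x (f e)) by (apply Hxy; left; reflexivity).
    exists x. intros c0 hc0. split; intro h.
    + rewrite (onlyv c0 hc0 h). exact Ix.
    + destruct (classic (c0 = e)) as [->|nce]; [exact Ive|].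
      destruct (share_g G1 G2 I c0 e hc0 He (ex_intro _ x (conj h Ix))) as [u [Iuc Iue]].
      destruct (Ee u Iue) as [-> | ->]; [exact Iuc|].
      exfalso. exact (nce (onlyw c0 hc0 Iuc)).
Qed.

Lemma Twin (G1 : good E1 c1) (G2 : good E2 c2) (I : iso_data f g) v w x :
  P f v x -> P f w x -> E1 v w -> exists x', x' <> x /\ P f v x'.
Proof.
  intros Pv Pw Evw.
  destruct (L_at G1 v w Evw) as [e [He [Ive Iwe]]].
  assert (nvw : v <> w) by (intro q; subst; exact (no_loop G1 w Evw)).
  assert (eqvw : forall c0 : B0 E1, atom c0 -> (Inc v c0 <-> Inc w c0)).
  { intros c0 hc0. rewrite (Pv c0 hc0), (Pw c0 hc0). tauto. }
  assert (Hfe := atom_f I e He).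
  assert (Ix : Inc x (f e)) by (apply Pv; auto).
  destruct (L_other G2 (f e) x Hfe Ix) as [x' [nx [Ix' _]]].
  exists x'. split; auto. intros c0 hc0. split; intro h.
  - assert (c0 = e) as -> by (apply (L_two G1 c0 e v w); auto; apply eqvw; auto). exact Ix'.
  - destruct (classic (c0 = e)) as [->|nce]; [exact Ive|].
    destruct (share_g G1 G2 I c0 e hc0 He (ex_intro _ x' (conj h Ix'))) as [u [Iuc Iue]].
    destruct (L_ends2 G1 e v w u He Ive Iwe nvw Iue) as [-> | ->]; [exact Iuc|].
    apply eqvw; auto.
Qed.

Lemma Qlem (G1 : good E1 c1) (G2 : good E2 c2) (I : iso_data f g) v x x' :
  P f v x -> P f v x' -> x <> x' -> E2 x x'.
Proof.
  intros Px Px' n. destruct (L_exist G1 v) as [e [He Ive]].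
  apply (L_edge G2 (f e)); auto; [apply (atom_f I); auto|apply Px|apply Px']; auto.
Qed.

Lemma Rex (G1 : good E1 c1) (G2 : good E2 c2) (I : iso_data f g) v : exists x, R f c1 c2 v x.
Proof.
  destruct (Pex G1 G2 I v) as [x Px].
  destruct (classic (exists x', x' <> x /\ P f v x')) as [[x' [nx Px']]|nE].
  - destruct (Bool.bool_dec (c1 v) (c2 x)) as [eq|neq].
    + exists x. split; auto.
    + exists x'. split; auto. intros _.
      pose proof G2 as [_ [hc _]].
      pose proof (hc _ _ (Qlem G1 G2 I v x x' Px Px' (fun e => nx (eq_sym e)))) as hh.
      destruct (c1 v), (c2 x), (c2 x'); congruence.
  - exists x. split; auto. intros h; contradiction.
Qed.

Lemma Runi (G1 : good E1 c1) (G2 : good E2 c2) (I : iso_data f g) v x x' :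
  R f c1 c2 v x -> R f c1 c2 v x' -> x = x'.
Proof.
  intros [Px Cx] [Px' Cx']. apply NNPP; intro n.
  pose proof G2 as [_ [hc _]].
  pose proof (hc _ _ (Qlem G1 G2 I v x x' Px Px' n)) as hh.
  rewrite <- (Cx (ex_intro _ x' (conj (fun e => n (eq_sym e)) Px'))) in hh.
  rewrite <- (Cx' (ex_intro _ x (conj n Px))) in hh. apply hh; reflexivity.
Qed.

Lemma Redge (G1 : good E1 c1) (G2 : good E2 c2) (I : iso_data f g) v w x y :
  R f c1 c2 v x -> R f c1 c2 w y -> E1 v w -> E2 x y.
Proof.
  intros [Px Cx] [Py Cy] Evw.
  destruct (L_at G1 v w Evw) as [e [He [Ive Iwe]]].
  assert (Ix : Inc x (f e)) by (apply Px; auto).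
  assert (Iy : Inc y (f e)) by (apply Py; auto).
  destruct (classic (x = y)) as [<-|nxy].
  - exfalso. pose proof G1 as [hs [hc _]].
    pose proof (Cx (Twin G1 G2 I v w x Px Py Evw)) as h1.
    pose proof (Cy (Twin G1 G2 I w v x Py Px (hs _ _ Evw))) as h2.
    apply (hc v w Evw). congruence.
  - apply (L_edge G2 (f e)); auto. apply (atom_f I); auto.
Qed.

Lemma P_sym (I : iso_data f g) v x : P f v x <-> P g x v.
Proof.
  pose proof I as [gf [fg _]]. split; intro H.
  - intros b hb. rewrite (H (g b) (atom_f (iso_sym I) b hb)), fg. tauto.
  - intros a ha. rewrite (H (f a) (atom_f I a ha)), gf. tauto.
Qed.

Lemma other_P (G1 : good E1 c1) (G2 : good E2 c2) (I : iso_data f g) v x x' :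
  P f v x -> P f v x' -> x' <> x -> exists v', v' <> v /\ P g x v'.
Proof.
  intros Px Px' n. destruct (L_exist G1 v) as [e [He Ive]].
  assert (Hfe := atom_f I e He).
  assert (Ix : Inc x (f e)) by (apply Px; auto).
  assert (Ix' : Inc x' (f e)) by (apply Px'; auto).
  destruct (L_other G1 e v He Ive) as [w [nwv [Iwe _]]].
  destruct (Pex G1 G2 I w) as [z Pz].
  exists w. split; auto. apply P_sym; auto.
  destruct (L_ends2 G2 (f e) x x' z Hfe Ix Ix' (fun q => n (eq_sym q)) (proj1 (Pz e He) Iwe)) as [-> | ->].
  - exact Pz.
  - intros c0 hc0. rewrite (Pz c0 hc0), <- (Px' c0 hc0), (Px c0 hc0). tauto.
Qed.
End Vert.

Lemma R_sym {V1 V2 : Type} {E1 : V1 -> V1 -> Prop} {E2 : V2 -> V2 -> Prop}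
  {f : B0 E1 -> B0 E2} {g : B0 E2 -> B0 E1} {c1 : V1 -> bool} {c2 : V2 -> bool}
  (G1 : good E1 c1) (G2 : good E2 c2) (I : iso_data f g) v x :
  R f c1 c2 v x <-> R g c2 c1 x v.
Proof.
  split; intros [Hp Hc].
  - assert (Hp' : P g x v) by (apply (P_sym (c1:=c1) (c2:=c2) I); exact Hp).
    split; [exact Hp'|]. intros [v' [nv Pv']].
    symmetry. apply Hc. exact (other_P G2 G1 (iso_sym I) x v v' Hp' Pv' nv).
  - assert (Hp' : P f v x) by (apply (P_sym (c1:=c1) (c2:=c2) I); exact Hp).
    split; [exact Hp'|]. intros [x' [nx Px']].
    symmetry. apply Hc. exact (other_P G1 G2 I v x x' Hp' Px' nx).
Qed.

Theorem proposition4p4 (V1 : Type) (E1 : V1 -> V1 -> Prop)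
  (V2 : Type) (E2 : V2 -> V2 -> Prop)
  (hs1 : symmetric_rel E1) (hs2 : symmetric_rel E2)
  (hb1 : bipartite E1) (hb2 : bipartite E2)
  (hi1 : forall v, ~ isolated E1 v) (hi2 : forall v, ~ isolated E2 v) :
  poset_iso E1 E2 -> graph_iso E1 E2.
Proof.
  intros [f [g [gf [fg hf]]]].
  destruct hb1 as [c1 hc1], hb2 as [c2 hc2].
  assert (G1 : good E1 c1) by (split; [|split]; assumption).
  assert (G2 : good E2 c2) by (split; [|split]; assumption).
  assert (I : iso_data f g) by (split; [|split]; assumption).
  pose proof (iso_sym I) as I'.
  set (h := fun v => proj1_sig (constructive_indefinite_description _ (Rex G1 G2 I v))).
  assert (hR : forall v, R f c1 c2 v (h v))
    by (intro v; exact (proj2_sig (constructive_indefinite_description _ (Rex G1 G2 I v)))).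
  set (k := fun x => proj1_sig (constructive_indefinite_description _ (Rex G2 G1 I' x))).
  assert (kR : forall x, R g c2 c1 x (k x))
    by (intro x; exact (proj2_sig (constructive_indefinite_description _ (Rex G2 G1 I' x)))).
  assert (kh : forall v, k (h v) = v).
  { intro v. apply (Runi G2 G1 I' (h v)); [apply kR|]. apply (R_sym G1 G2 I), hR. }
  assert (hk : forall x, h (k x) = x).
  { intro x. apply (Runi G1 G2 I (k x)); [apply hR|]. apply (R_sym G1 G2 I), kR. }
  exists h, k. split; [exact kh|]. split; [exact hk|].
  intros v w. split; intro e.
  - exact (Redge G1 G2 I v w (h v) (h w) (hR v) (hR w) e).
  - rewrite <- (kh v), <- (kh w).
    exact (Redge G2 G1 I' (h v) (h w) _ _ (kR (h v)) (kR (h w)) e).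
Qed.
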